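(* Let $d$ be a positive integer and $q$ a prime power. Then there exists $N$ such that for every integer $n\ge N$ there exists a $q$-GDD of type $n^{q^d}$ (that is, $q^d$ groups each of size $n$) with strong dimension at least $d$.
   Context: A group divisible design (GDD) is a triple $(X,\Pi,\mathcal{B})$ where $X$ is a finite set of points, $\Pi$ is a partition of $X$ into groups, and $\mathcal{B}$ is a set of subsets of $X$ (blocks) such that each block meets each group in at most one point and any two points from distinct groups lie together in exactly one block; a $k$-GDD is one in which every block has size $k$. The type $g^u$ means $u$ groups of size $g$. A strong subspace of the GDD is a subset $X'\subseteq X$ that is a union of groups and such that every block containing two points of $X'$ is contained in $X'$; it is proper if $X'\ne X$. The GDD has strong dimension at least $d$ if every set of at most $d$ points is contained in a proper strong subspace. *)

(* Defs.v *)
From mathcomp Require Import all_boot.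
Set Implicit Arguments. Unset Strict Implicit. Unset Printing Implicit Defensive.

Section GDD.
Variable T : finType.

Definition is_GDD (G B : {set {set T}}) : Prop :=
  [/\ partition G [set: T],
      (forall b g, b \in B -> g \in G -> #|b :&: g| <= 1) &
      (forall x y, pblock G x != pblock G y ->
         #|[set b in B | (x \in b) && (y \in b)]| = 1)].

Definition is_kGDD (k : nat) (G B : {set {set T}}) : Prop :=
  is_GDD G B /\ (forall b, b \in B -> #|b| = k).

Definition has_type (g u : nat) (G : {set {set T}}) : Prop :=
  #|G| = u /\ (forall A, A \in G -> #|A| = g).

Definition strong_subspace (G B : {set {set T}}) (S : {set T}) : Prop :=
  S = \bigcup_(g in G | g \subset S) g /\
  (forall b, b \in B -> 1 < #|b :&: S| -> b \subset S).

Definition strong_dim_ge (G B : {set {set T}}) (d : nat) : Prop :=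
  forall A : {set T}, #|A| <= d ->
    exists S : {set T}, [/\ strong_subspace G B S, S != [set: T] & A \subset S].
End GDD.

Definition prime_power (q : nat) : Prop :=
  exists p k, [/\ prime p, 0 < k & q = p ^ k].

(* Main.v *)
Require Import Defs.
From mathcomp Require Import all_boot.
From mathcomp Require Import all_order all_algebra all_fingroup all_solvable all_field.
From mathcomp Require Import boolp.
From mathcomp Require Import ring zify.
Set Implicit Arguments. Unset Strict Implicit. Unset Printing Implicit Defensive.
Import GRing.Theory.


Definition isOA (C S : finType) (P : {ffun C -> S} -> Prop) :=
  forall i j : C, i != j -> forall a b : S,
    exists! r, P r /\ r i = a /\ r j = b.

Definition hasOA k n := exists (S : finType) (P : {ffun 'I_k -> S} -> Prop),
  #|S| = n /\ isOA P.
Definition hasOAc k n := exists (S : finType) (P : {ffun 'I_k -> S} -> Prop),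
  [/\ #|S| = n, isOA P & exists c, P [ffun=> c]].

Section Bij.
Variables (A B : finType) (e : #|A| = #|B|).
Definition bijf (x : A) : B := enum_val (cast_ord e (enum_rank x)).
Definition bijg (y : B) : A := enum_val (cast_ord (esym e) (enum_rank y)).
Lemma bijfK : cancel bijf bijg.
Proof. by move=> x; rewrite /bijf /bijg enum_valK cast_ordK enum_rankK. Qed.
Lemma bijgK : cancel bijg bijf.
Proof. by move=> x; rewrite /bijf /bijg enum_valK cast_ordKV enum_rankK. Qed.
End Bij.

Lemma OA_sym_transport (C S S' : finType) (P : {ffun C -> S} -> Prop)
  (f : S -> S') (g : S' -> S) : cancel f g -> cancel g f -> isOA P ->
  isOA (fun r' : {ffun C -> S'} => P [ffun i => g (r' i)]).
Proof.
move=> fK gK oa i j ij a b.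
have [r [[Pr [ri rj]] ru]] := oa i j ij (g a) (g b).
exists [ffun x => f (r x)]; split.
  split; last by rewrite !ffunE ri rj !gK.
  by have -> : [ffun i0 => g ([ffun x => f (r x)] i0)] = r
     by apply/ffunP=> x; rewrite !ffunE fK.
move=> r' [Pr' [r'i r'j]].
have E : r = [ffun i => g (r' i)].
  by apply: ru; rewrite !ffunE r'i r'j.
by apply/ffunP=> x; rewrite !ffunE E ffunE gK.
Qed.

Lemma hasOA_any k n (S' : finType) : hasOA k n -> #|S'| = n ->
  exists P : {ffun 'I_k -> S'} -> Prop, isOA P.
Proof.
move=> [S [P [cS oa]]] cS'.
have e : #|S| = #|S'| by rewrite cS cS'.
eexists; exact: (OA_sym_transport (bijfK e) (bijgK e) oa).
Qed.

Lemma hasOAc_any k n (S' : finType) : hasOAc k n -> #|S'| = n ->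
  exists (P : {ffun 'I_k -> S'} -> Prop), isOA P /\ exists c, P [ffun=> c].
Proof.
move=> [S [P [cS oa [c Pc]]]] cS'.
have e : #|S| = #|S'| by rewrite cS cS'.
eexists; split; first exact: (OA_sym_transport (bijfK e) (bijgK e) oa).
exists (bijf e c) => /=.
suff -> : [ffun i => bijg e (([ffun=> bijf e c] : {ffun 'I_k -> S'}) i)] = ([ffun=> c] : {ffun 'I_k -> S}) by [].
by apply/ffunP=> x; rewrite !ffunE bijfK.
Qed.

Lemma OA_col_transport (C C' S : finType) (P : {ffun C -> S} -> Prop)
  (h : C' -> C) (hi : C -> C') : cancel h hi -> cancel hi h -> isOA P ->
  isOA (fun r' : {ffun C' -> S} => P [ffun c => r' (hi c)]).
Proof.
move=> hK hiK oa i j ij a b.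
have hij : h i != h j by apply: contra ij => /eqP/(can_inj hK)/eqP.
have [r [[Pr [ri rj]] ru]] := oa _ _ hij a b.
exists [ffun x => r (h x)]; split.
  split; last by rewrite !ffunE ri rj.
  by have -> : [ffun c => [ffun x => r (h x)] (hi c)] = r
     by apply/ffunP=> x; rewrite !ffunE hiK.
move=> r' [Pr' [r'i r'j]].
have E : r = [ffun c => r' (hi c)].
  by apply: ru; rewrite !ffunE !hK r'i r'j.
by apply/ffunP=> x; rewrite !ffunE E ffunE hK.
Qed.


Section RingOA.
Local Open Scope ring_scope.
Variables (R : finComUnitRingType) (k : nat) (c : 'I_k -> R).
Hypothesis cu : forall i j, i != j -> (c i - c j) \is a GRing.unit.

Definition ringP (r : {ffun 'I_k -> R}) := exists x y, r = [ffun i => x + c i * y].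

Lemma ring_OA : isOA ringP.
Proof.
move=> i j ij a b.
have u := cu ij.
pose y := (a - b) / (c i - c j); pose x := a - c i * y.
have ey : (c i - c j) * y = a - b by rewrite /y mulrC divrK.
exists [ffun l => x + c l * y]; split.
  split; first by exists x, y.
  rewrite !ffunE /x; split; first by ring.
  have -> : a - c i * y + c j * y = a - (c i - c j) * y by ring.
  by rewrite ey; ring.
move=> r' [[x' [y' ->]] [ri rj]]; rewrite !ffunE in ri rj.
have ey' : (c i - c j) * y' = a - b by rewrite -ri -rj; ring.
have yy : y' = y by apply: (mulrI u); rewrite ey ey'.
have xx : x' = x by rewrite /x -ri yy; ring.
by rewrite xx yy.
Qed.

Lemma ring_const a : ringP [ffun=> a].
Proof. by exists a, 0; apply/ffunP=> i; rewrite !ffunE mulr0 addr0. Qed.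
End RingOA.

Lemma hasOAc_ring (R : finComUnitRingType) k (c : 'I_k -> R) :
  (forall i j, i != j -> (c i - c j)%R \is a GRing.unit) -> hasOAc k #|R|.
Proof.
move=> cu; exists R, (ringP c); split => //; first exact: ring_OA.
by exists 0%R; apply: ring_const.
Qed.

Lemma hasOAc_field (F : finFieldType) k : k <= #|F| -> hasOAc k #|F|.
Proof.
move=> kF.
pose c (i : 'I_k) : F := enum_val (Ordinal (leq_trans (ltn_ord i) kF)).
apply: (@hasOAc_ring F k c) => i j ij; rewrite unitfE subr_eq0.
apply: contra ij => /eqP/enum_val_inj [] /eqP.
by rewrite -(inj_eq val_inj).
Qed.

Definition nsm k N := forall p, prime p -> p %| N -> k <= p.

Lemma nsm_coprime k N d : nsm k N -> 0 < d < k -> coprime N d.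
Proof.
move=> ns /andP[d0 dk]; rewrite /coprime.
have g0 : 0 < gcdn N d by rewrite gcdn_gt0 d0 orbT.
case: (ltngtP (gcdn N d) 1) => // [|g1]; first by rewrite ltnS leqn0 => /eqP e; rewrite e in g0.
have pp := pdiv_prime g1.
have pd := pdiv_dvd (gcdn N d).
have := ns _ pp (dvdn_trans pd (dvdn_gcdl _ _)).
have := dvdn_leq d0 (dvdn_trans pd (dvdn_gcdr _ _)).
lia.
Qed.

Lemma hasOAc_unit k : hasOAc k 1.
Proof.
exists unit, (fun _ => True). constructor; [by rewrite card_unit| |by exists tt].
move=> i j _ a b; exists ([ffun=> tt] : {ffun 'I_k -> unit}); split; first by case: a; case: b; rewrite !ffunE.
move=> r' _.
by apply/ffunP=> x; case: (r' x); rewrite ffunE.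
Qed.

Lemma hasOAc_cyc k N : 0 < N -> nsm k N -> hasOAc k N.
Proof.
move=> N0 ns; case: (ltngtP N 1) => [|N1|->]; [lia| |exact: hasOAc_unit].
have cardZ : #|'Z_N| = N by rewrite card_ord Zp_cast.
rewrite -cardZ.
apply: (@hasOAc_ring _ k (fun i => (i : nat)%:R%R)) => i j ij.
wlog lij : i j ij / i < j.
  move=> H; case: (ltngtP i j) => [l|l|e]; first exact: H.
    by rewrite -opprB unitrN; apply: H => //; rewrite eq_sym.
  by move: ij; rewrite -(inj_eq val_inj) /= e eqxx.
rewrite -opprB unitrN -natrB 1?ltnW // unitZpE //.
apply: (nsm_coprime ns); rewrite subn_gt0 lij /=.
have := ltn_ord j; lia.
Qed.

Lemma hasOA_of_c k n : hasOAc k n -> hasOA k n.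
Proof. by move=> [S [P [cS oa _]]]; exists S, P. Qed.


Section Wilson.
Variables (k u : nat) (T Q : finType) (c : Q) (U : finType).
Local Notation Q' := {x : Q | x != c}.
Variables (PT : {ffun 'I_k.+1 -> T} -> Prop) (PQ : {ffun 'I_k -> Q} -> Prop)
  (Pm : {ffun 'I_k -> Q'} -> Prop) (Pu : {ffun 'I_k -> U} -> Prop)
  (e : U -> T).
Hypotheses (oaT : isOA PT) (oaQ : isOA PQ) (PQc : PQ [ffun=> c])
  (oam : isOA Pm) (oau : isOA Pu) (einj : injective e).

Local Notation S := ((T * Q') + U)%type.
Definition wid (i : 'I_k) : 'I_k.+1 := widen_ord (leqnSn k) i.
Lemma wid_max i : wid i != ord_max.
Proof. by rewrite -(inj_eq val_inj) /= neq_ltn ltn_ord. Qed.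
Lemma wid_inj : injective wid.
Proof. by move=> x y /(congr1 val) /= /val_inj. Qed.
Lemma wid_neq i j : i != j -> wid i != wid j.
Proof. by rewrite (inj_eq wid_inj). Qed.

Definition fb (rho : {ffun 'I_k.+1 -> T}) (sg : {ffun 'I_k -> Q}) (x : U)
  : {ffun 'I_k -> S} :=
  [ffun i => if (insub (sg i) : option Q') is Some q then inl (rho (wid i), q) else inr x].

Lemma fb_inl rho (sg : {ffun 'I_k -> Q}) (x : U) i tau q :
  fb rho sg x i = inl (tau, q) <-> rho (wid i) = tau /\ sg i = val q.
Proof.
rewrite ffunE; case: insubP => [q' ne <-|].
  split; first by case=> -> ->.
  by case=> -> /val_inj ->.
rewrite negbK => /eqP E; split => //; case=> _ E'.
by move: (valP q); rewrite -E' E eqxx.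
Qed.

Lemma fb_inr rho (sg : {ffun 'I_k -> Q}) (x : U) i y :
  fb rho sg x i = inr y <-> sg i = c /\ x = y.
Proof.
rewrite ffunE; case: insubP => [q' ne E|].
  by split => // -[E']; move: ne => /=; rewrite E' eqxx.
by rewrite negbK => /eqP E; split; [case=> -> | case=> _ ->].
Qed.

Lemma fb_val rho (sg : {ffun 'I_k -> Q}) (x : U) i (q : Q') : sg i = val q -> fb rho sg x i = inl (rho (wid i), q).
Proof. by move=> E; apply/fb_inl. Qed.
Lemma fb_c rho (sg : {ffun 'I_k -> Q}) (x : U) i : sg i = c -> fb rho sg x i = inr x.
Proof. by move=> E; apply/fb_inr. Qed.

Definition Pnew (r : {ffun 'I_k -> S}) :=
  (exists rho sg, [/\ PT rho, (forall x, e x <> rho ord_max), Pm sg &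
       r = [ffun i => inl (rho (wid i), sg i)]])
  \/ (exists rho sg x, [/\ PT rho, e x = rho ord_max, PQ sg, sg <> [ffun=> c] &
       r = fb rho sg x])
  \/ (exists pi, Pu pi /\ r = [ffun i => inr (pi i)]).

Lemma new_inl i j (ij : i != j) tau q b :
  exists! r, Pnew r /\ r i = inl (tau, q) /\ r j = b.
Proof.
have wij := wid_neq ij.
have wim := wid_max i.
case: b => [[tau2 q2] | y].
-
  have [rho [[Pr [ri rj]] ru]] := oaT wij tau tau2.
  case: (boolP [exists x, e x == rho ord_max]) => [/existsP[x /eqP ex] | nex].
  + have [sg [[Ps [si sj]] su]] := oaQ ij (val q) (val q2).
    have sgnc : sg <> [ffun=> c].
      by move=> E; move: (valP q); rewrite -si E ffunE eqxx.
    exists (fb rho sg x); split.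
      split; first by right; left; exists rho, sg, x.
      by rewrite (fb_val _ _ si) (fb_val _ _ sj) ri rj.
    move=> r' [[[rho' [sg' [Pr' ne' Ps' ->]]] | [[rho' [sg' [x' [Pr' ex' Ps' nc' ->]]]] | [pi [Pp ->]]]] [r'i r'j]].
    * rewrite !ffunE in r'i r'j; case: r'i => r1 _; case: r'j => r2 _.
      have E : rho = rho' by apply: ru.
      by case: (ne' x); rewrite ex E.
    * move/fb_inl: r'i => [r1 s1]; move/fb_inl: r'j => [r2 s2].
      have E : rho = rho' by apply: ru.
      have E2 : sg = sg' by apply: su.
      have E3 : x = x' by apply: einj; rewrite ex ex' E.
      by rewrite E E2 E3.
    * by rewrite ffunE in r'i.
  + have nex' : forall x, e x <> rho ord_max.
      by move=> x ex; move: nex; rewrite negb_exists => /forallP/(_ x); rewrite ex eqxx.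
    have [sg [[Ps [si sj]] su]] := oam ij q q2.
    exists [ffun l => inl (rho (wid l), sg l)]; split.
      split; first by left; exists rho, sg.
      by rewrite !ffunE ri rj si sj.
    move=> r' [[[rho' [sg' [Pr' ne' Ps' ->]]] | [[rho' [sg' [x' [Pr' ex' Ps' nc' ->]]]] | [pi [Pp ->]]]] [r'i r'j]].
    * rewrite !ffunE in r'i r'j; case: r'i => r1 s1; case: r'j => r2 s2.
      have E : rho = rho' by apply: ru.
      have E2 : sg = sg' by apply: su.
      by rewrite E E2.
    * move/fb_inl: r'i => [r1 s1]; move/fb_inl: r'j => [r2 s2].
      have E : rho = rho' by apply: ru.
      by case: (nex' x'); rewrite E.
    * by rewrite ffunE in r'i.
-
  have [rho [[Pr [ri rj]] ru]] := oaT (wid_max i) tau (e y).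
  have [sg [[Ps [si sj]] su]] := oaQ ij (val q) c.
  have sgnc : sg <> [ffun=> c].
    by move=> E; move: (valP q); rewrite -si E ffunE eqxx.
  exists (fb rho sg y); split.
    split; first by right; left; exists rho, sg, y.
    by rewrite (fb_val _ _ si) (fb_c _ _ sj) ri.
  move=> r' [[[rho' [sg' [Pr' ne' Ps' ->]]] | [[rho' [sg' [x' [Pr' ex' Ps' nc' ->]]]] | [pi [Pp ->]]]] [r'i r'j]].
  * by rewrite ffunE in r'j.
  * move/fb_inl: r'i => [r1 s1]; move/fb_inr: r'j => [s2 xy].
    have E : rho = rho' by apply: ru; rewrite -ex' xy.
    have E2 : sg = sg' by apply: su.
    by rewrite E E2 xy.
  * by rewrite ffunE in r'i.
Qed.

Lemma new_inr i j (ij : i != j) x y :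
  exists! r, Pnew r /\ r i = inr x /\ r j = inr y.
Proof.
have [pi [[Pp [pii pij]] pu]] := oau ij x y.
exists [ffun l => inr (pi l)]; split.
  split; first by right; right; exists pi.
  by rewrite !ffunE pii pij.
move=> r' [[[rho' [sg' [Pr' ne' Ps' ->]]] | [[rho' [sg' [x' [Pr' ex' Ps' nc' ->]]]] | [pi' [Pp' ->]]]] [r'i r'j]].
- by rewrite ffunE in r'i.
- move/fb_inr: r'i => [s1 _]; move/fb_inr: r'j => [s2 _].
  have [sg0 [_ su]] := oaQ ij c c.
  have E1 : sg0 = sg' by apply: su.
  have E2 : sg0 = [ffun=> c] by apply: su; rewrite !ffunE.
  by case: nc'; rewrite -E1 E2.
- rewrite !ffunE in r'i r'j; case: r'i => r1; case: r'j => r2.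
  by rewrite (pu pi'); split.
Qed.

Lemma wilson_OA : isOA Pnew.
Proof.
move=> i j ij a b.
case: a => [[tau q] | x]; first exact: new_inl.
case: b => [[tau q] | y]; last exact: new_inr.
have ji : j != i by rewrite eq_sym.
have [r [[Pr [ri rj]] ru]] := new_inl ji tau q (inr x).
exists r; split => // r' [P' [r'i r'j]].
by apply: ru.
Qed.

Lemma card_S : #|{: S}| = #|T| * #|{: Q'}| + #|U|.
Proof. by rewrite card_sum card_prod. Qed.
End Wilson.

Lemma card_Q' (Q : finType) (c : Q) : #|{: {x : Q | x != c}}| = #|Q|.-1.
Proof. by rewrite card_sig cardC1. Qed.

Lemma wilson k m t u : hasOA k.+1 t -> hasOAc k m.+1 -> hasOA k m ->
  hasOA k u -> u <= t -> hasOA k (m * t + u).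
Proof.
move=> [T [PT [cT oaT]]] [Q [PQ [cQ oaQ [c PQc]]]] hm hu ut.
have cQ' : #|{: {x : Q | x != c}}| = m by rewrite card_Q' cQ.
have [Pm oam] := hasOA_any hm cQ'.
have [Pu oau] := hasOA_any hu (card_ord u).
pose e (x : 'I_u) : T := enum_val (cast_ord (esym cT) (widen_ord ut x)).
have einj : injective e.
  by move=> x y /enum_val_inj /cast_ord_inj /(congr1 val) /= /val_inj.
eexists; eexists; split; last first.
  by apply: (wilson_OA oaT oaQ PQc oam oau einj).
by rewrite card_S cQ' cT card_ord mulnC.
Qed.


Fixpoint oddf n := if n is n'.+1 then (if odd n then n else 1) * oddf n' else 1.

Lemma oddf_odd n : odd (oddf n).
Proof. elim: n => //= n IH; rewrite oddM IH andbT; by case: ifP. Qed.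

Lemma oddf_gt0 n : 0 < oddf n.
Proof. by rewrite odd_gt0 // oddf_odd. Qed.

Lemma oddf_dvd p n : prime p -> odd p -> p <= n -> p %| oddf n.
Proof.
move=> pp op; elim: n => [|n IH]; first by rewrite leqn0 => /eqP E; rewrite E in pp.
rewrite leq_eqVlt => /orP[/eqP E | ]; last by rewrite ltnS => /IH h; exact: dvdn_mull.
have -> : oddf n.+1 = (if odd n.+1 then n.+1 else 1) * oddf n by [].
by rewrite -E op; apply: dvdn_mulr.
Qed.

Lemma oddf_dvd_le p n : prime p -> p %| oddf n -> p <= n.
Proof.
move=> pp; elim: n => [|n IH] /=; first by rewrite dvdn1 => /eqP E; rewrite E in pp.
rewrite Euclid_dvdM // => /orP[|/IH]; last by move=> h; exact: leqW.
case: ifP => _; first exact: dvdn_leq.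
by rewrite dvdn1 => /eqP E; rewrite E in pp.
Qed.

Lemma odd_prime3 p : prime p -> odd p -> 3 <= p.
Proof.
move=> pp op; have := prime_gt1 pp; case: p pp op => [|[|[|p]]] //.
Qed.

Lemma nsm_gen k x : odd x -> (forall p, prime p -> odd p -> p <= k -> p %| x -> False) ->
  nsm k.+1 x.
Proof.
move=> ox H p pp px; rewrite ltnNge; apply/negP => pk.
case: (even_prime pp) => [E | op].
  by move: px; rewrite E dvdn2 ox.
exact: (H p pp op pk px).
Qed.

Lemma nsm_cop k x : odd x -> coprime x (oddf k) -> nsm k.+1 x.
Proof.
move=> ox cx; apply: nsm_gen => // p pp op pk px.
have pO := oddf_dvd pp op pk.
have : p %| gcdn x (oddf k) by rewrite dvdn_gcd px pO.
by move: cx; rewrite /coprime => /eqP ->; rewrite dvdn1 => /eqP E; rewrite E in pp.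
Qed.

Lemma nsm_weak k x : nsm k.+1 x -> nsm k x.
Proof. by move=> h p pp px; apply: ltnW; apply: h. Qed.

Lemma nsm_coprime_oddf k x : nsm k.+1 x -> coprime x (oddf k).
Proof.
move=> ns; rewrite /coprime.
have g0 : 0 < gcdn x (oddf k) by rewrite gcdn_gt0 oddf_gt0 orbT.
case: (ltngtP (gcdn x (oddf k)) 1) => // [|g1]; first by lia.
have pp := pdiv_prime g1.
have pd := pdiv_dvd (gcdn x (oddf k)).
have := ns _ pp (dvdn_trans pd (dvdn_gcdl _ _)).
have := oddf_dvd_le pp (dvdn_trans pd (dvdn_gcdr _ _)).
lia.
Qed.

Lemma pig (a0 a1 a2 b0 b1 b2 : bool) : ~~ (a0 && a1) -> ~~ (a0 && a2) -> ~~ (a1 && a2) ->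
  ~~ (b0 && b1) -> ~~ (b0 && b2) -> ~~ (b1 && b2) ->
  [|| ~~ a0 && ~~ b0, ~~ a1 && ~~ b1 | ~~ a2 && ~~ b2].
Proof. by case: a0; case: a1; case: a2; case: b0; case: b1; case: b2. Qed.

Lemma coprime_addMl a b N : coprime (b * N + a) N = coprime a N.
Proof. by rewrite -coprime_modl modnMDl coprime_modl. Qed.

Lemma tsel N : odd N -> forall n m t0, coprime m N -> m * (t0 + 2 * N) <= n ->
  exists t, [/\ t0 <= t < t0 + 2 * N, odd t, coprime t N & coprime (n - m * t) N].
Proof.
elim/ltn_ind: N => N IH oN n m t0 cm le.
case: (ltngtP N 1) => [N0 | N1 | N1].
- by move: oN; have -> : N = 0 by lia.
- set p := pdiv N.
  have pp : prime p := pdiv_prime N1.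
  have pN : p %| N := pdiv_dvd N.
  set N' := N %/ p.
  have eN : N = p * N' by rewrite mulnC divnK.
  have op : odd p by move: oN; rewrite eN oddM => /andP[].
  have oN' : odd N' by move: oN; rewrite eN oddM => /andP[].
  have p3 := odd_prime3 pp op.
  have N'0 : 0 < N' by rewrite odd_gt0.
  have pN3 : 3 * N' <= p * N' by rewrite leq_mul2r p3 orbT.
  have ltN : N' < N by rewrite eN; lia.
  have cm' : coprime m N' by apply: coprime_dvdr cm; rewrite eN dvdn_mull.
  have cmp : coprime m p by apply: coprime_dvdr cm.
  have le' : m * (t0 + 2 * N') <= n.
    apply: leq_trans le; rewrite leq_mul2l; apply/orP; right; lia.
  have [t' [/andP[t0t' t't0] ot' ct' cu']] := IH N' ltN oN' n m t0 cm' le'.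
  case: (boolP (p %| N')) => [pN' | npN'].
    exists t'; split => //.
    + rewrite t0t' /=; lia.
    + by rewrite eN coprimeMr ct' andbT (coprime_dvdr pN').
    + by rewrite eN coprimeMr cu' andbT (coprime_dvdr pN').
  pose tj j := 2 * (j * N') + t'.
  have jN j : j < 3 -> j * N' <= 2 * N' by move=> j3; rewrite leq_mul2r; apply/orP; right; lia.
  have tjb j : j < 3 -> tj j < t0 + 2 * N.
    by move=> j3; have := jN j j3; rewrite /tj eN; lia.
  have mtj j : j < 3 -> m * tj j <= n.
    move=> j3; apply: leq_trans le; rewrite leq_mul2l; apply/orP; right.
    by apply: ltnW; apply: tjb.
  have split_j j1 j2 : j1 < j2 -> j2 * N' = (j2 - j1) * N' + j1 * N'.
    by move=> l; rewrite -mulnDl subnK // ltnW.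
  have key j1 j2 : j1 < j2 < 3 -> p %| 2 * ((j2 - j1) * N') -> False.
    move=> /andP[l1 l2]; rewrite !Euclid_dvdM // => /orP[h|/orP[h|h]].
    + by have := dvdn_leq _ h => /(_ isT); lia.
    + have := dvdn_leq _ h; rewrite subn_gt0 l1 => /(_ isT); lia.
    + by rewrite h in npN'.
  have bt j1 j2 : j1 < j2 < 3 -> ~~ ((p %| tj j1) && (p %| tj j2)).
    move=> jj; apply/negP => /andP[h1 h2]; apply: (key _ _ jj).
    have : tj j2 = 2 * ((j2 - j1) * N') + tj j1.
      by rewrite /tj; move: jj => /andP[l1 _]; rewrite (split_j _ _ l1); lia.
    by move=> E; rewrite E in h2; rewrite -(dvdn_addl _ h1).
  have bu j1 j2 : j1 < j2 < 3 -> ~~ ((p %| n - m * tj j1) && (p %| n - m * tj j2)).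
    move=> jj; apply/negP => /andP[h1 h2].
    have e1 : n - m * tj j1 = m * (2 * ((j2 - j1) * N')) + (n - m * tj j2).
      have := mtj j2; have := mtj j1.
      move: jj => /andP[l1 l2]; rewrite /tj (split_j _ _ l1).
      move=> h3 h4; have := h3 (ltn_trans l1 l2); have := h4 l2.
      rewrite !mulnDr; lia.
    move: h1; rewrite e1 (dvdn_addl _ h2) Euclid_dvdM // => /orP[h|h].
      by move: cmp; rewrite coprime_sym (prime_coprime _ pp) h.
    exact: (key _ _ jj h).
  have := pig (bt 0 1 isT) (bt 0 2 isT) (bt 1 2 isT) (bu 0 1 isT) (bu 0 2 isT) (bu 1 2 isT).
  have fin j : j < 3 -> ~~ (p %| tj j) && ~~ (p %| n - m * tj j) ->
      exists t, [/\ t0 <= t < t0 + 2 * N, odd t, coprime t N & coprime (n - m * t) N].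
    move=> j3 /andP[g1 g2]; exists (tj j); split.
    + by rewrite tjb // andbT /tj; lia.
    + by rewrite /tj oddD oddM /= ot'.
    + by rewrite eN coprimeMr coprime_sym (prime_coprime _ pp) g1 /tj mulnA coprime_addMl.
    + rewrite eN coprimeMr coprime_sym (prime_coprime _ pp) g2 /=.
      have E : n - m * t' = (m * (2 * j)) * N' + (n - m * tj j).
        have := mtj j j3; rewrite /tj mulnDr.
        have -> : m * (2 * (j * N')) = (m * (2 * j)) * N' by rewrite !mulnA.
        move: (m * (2 * j) * N') (m * t') => A C; lia.
      by rewrite -(coprime_addMl _ (m * (2 * j))) -E.
  by case/or3P; [apply: fin 0 _ | apply: fin 1 _ | apply: fin 2 _].
- exists (if odd t0 then t0 else t0.+1); rewrite N1 !coprimen1; split => //.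
  + by case: ifP => _; lia.
  + by case: ifP => // /negbT; rewrite /= => ->.
Qed.


Lemma hasOAc_pow2 k s : 0 < s -> k <= 2 ^ s -> hasOAc k (2 ^ s).
Proof.
move=> s0 ks.
have [F _ cF] := @pPrimePowerField 2 s (isT : prime 2) s0.
by rewrite -cF; apply: hasOAc_field; rewrite cF.
Qed.

Lemma step k m n : hasOA k m -> hasOAc k m.+1 -> coprime m (oddf k) ->
  odd (n + m) -> (m + 1) * (m * (2 * oddf k + 1)) <= n -> hasOA k n.
Proof.
move=> hm hm1 cm onm big.
set O := oddf k.
have oO : odd O := oddf_odd k.
set D := n %/ (m + 1).
have hD : m * (2 * O + 1) <= D.
  rewrite /D leq_divRL; last by rewrite addn1.
  by rewrite mulnC.
have en := divn_eq n (m + 1); rewrite -/D in en.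
have le : m * (D + 1 + 2 * O) <= n by lia.
have [t [/andP[t0t tt0] ot ct cu]] := tsel oO cm le.
have ceil : n < (D + 1) * (m + 1) by rewrite addn1 ltn_ceil ?addn1.
have mtn : m * t <= n.
  apply: leq_trans le; rewrite leq_mul2l; apply/orP; right; exact: ltnW.
have nt : n < (m + 1) * t.
  apply: (leq_trans ceil); rewrite mulnC leq_mul2l t0t orbT //.
set u := n - m * t.
have ut : u <= t by rewrite /u; lia.
have ou : odd u by rewrite /u oddB // oddM ot andbT -oddD.
have t0 : 0 < t by rewrite odd_gt0.
have u0 : 0 < u by rewrite odd_gt0.
have nt' : nsm k.+1 t := nsm_cop ot ct.
have nu' : nsm k.+1 u := nsm_cop ou cu.
have hT : hasOA k.+1 t := hasOA_of_c (hasOAc_cyc t0 nt').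
have hU : hasOA k u := hasOA_of_c (hasOAc_cyc u0 (nsm_weak nu')).
have := wilson hT hm1 hm hU ut.
by rewrite /u subnKC.
Qed.

Lemma OA_large k : 2 <= k -> exists N0, forall n, N0 <= n -> hasOA k n.
Proof.
move=> k2.
set O := oddf k.
have oO : odd O := oddf_odd k.
have O0 : 0 < O := oddf_gt0 k.
set s := totient O * k.
have tO : 0 < totient O by rewrite totient_gt0.
have s0 : 0 < s by rewrite muln_gt0 tO; lia.
have ks : k <= 2 ^ s.
  apply: ltnW; apply: (leq_trans (ltn_expl k (isT : 1 < 2))).
  by rewrite leq_exp2l // leq_pmull.
have h2 : forall p, prime p -> odd p -> p <= k -> 2 ^ s = 1 %[mod p].
  move=> p pp op pk.
  have pO : p %| O := oddf_dvd pp op pk.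
  have eu : 2 ^ totient O = 1 %[mod O] by apply: Euler_exp_totient; rewrite coprime2n.
  have e2 : 2 ^ s = 1 %[mod O] by rewrite /s expnM -modnXm eu modnXm exp1n.
  by rewrite -(modn_dvdm _ pO) e2 (modn_dvdm _ pO).
have small p a : prime p -> odd p -> a < 3 -> a %% p = a.
  by move=> pp op a3; rewrite modn_small //; have := odd_prime3 pp op; lia.
pose me := 2 ^ s.
pose mo := 2 * 2 ^ s - 1.
have ome : ~~ odd me by rewrite /me oddX negb_or /=; lia.
have pos2 : 0 < 2 ^ s by rewrite expn_gt0.
have emo : mo.+1 = 2 ^ s.+1 by rewrite /mo expnS; lia.
have omo : odd mo by rewrite /mo oddB ?oddM //=; lia.
have hme : hasOA k me := hasOA_of_c (hasOAc_pow2 s0 ks).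
have nme1 : nsm k.+1 me.+1.
  apply: nsm_gen; first by rewrite /= ome.
  move=> p pp op pk /dvdnP [z ez].
  have : me.+1 %% p = 2 %% p by rewrite -addn1 -modnDml /me (h2 p pp op pk) modnDml.
  by rewrite ez modnMl (small p 2) // => /eqP; rewrite eq_sym.
have hme1 : hasOAc k me.+1 := hasOAc_cyc (ltn0Sn _) (nsm_weak nme1).
have cme : coprime me O by rewrite /me coprimeXl // coprime2n.
have hmo1 : hasOAc k mo.+1.
  rewrite emo; apply: hasOAc_pow2 => //; rewrite expnS; lia.
have nmo : nsm k.+1 mo.
  apply: nsm_gen => // p pp op pk /dvdnP [z ez].
  have : mo.+1 %% p = 2 %% p.
    by rewrite emo expnS -modnMmr (h2 p pp op pk) modnMmr muln1.
  by rewrite -addn1 -modnDml ez modnMl (small p 2) // (small p 1).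
have hmo : hasOA k mo := hasOA_of_c (hasOAc_cyc (odd_gt0 omo) (nsm_weak nmo)).
have cmo : coprime mo O := nsm_coprime_oddf nmo.
exists ((me + 1) * (me * (2 * O + 1)) + (mo + 1) * (mo * (2 * O + 1))) => n big.
case: (boolP (odd n)) => on.
- apply: (step hme hme1 cme); first by rewrite oddD on (negbTE ome).
  by apply: leq_trans big; apply: leq_addr.
- apply: (step hmo hmo1 cmo); first by rewrite oddD (negbTE on) omo.
  by apply: leq_trans big; apply: leq_addl.
Qed.


Section Hyper.
Variables (F : finFieldType) (d : nat).
Local Open Scope ring_scope.

Lemma hyperplane (P : {set 'rV[F]_d.+1}) : (#|P| <= d.+1)%N ->
  exists (f : 'cV[F]_d.+1) (c : 'M[F]_1), f != 0 /\ forall v, v \in P -> v *m f = c.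
Proof.
move=> cP.
set p0 := nth 0 (enum P) 0.
pose M : 'M[F]_d.+1 := \matrix_(i < d.+1) (nth p0 (enum P) i - p0).
have e0 : nth p0 (enum P) 0 = p0 by rewrite /p0; case: (enum P).
have r0 : row 0 M = 0 by rewrite rowK e0 subrr.
have dM : \det M = 0.
  rewrite (expand_det_row _ 0) big1 // => j _.
  have := congr1 (fun A : 'M_(1, d.+1) => A ord0 j) r0; rewrite !mxE => E.
  by rewrite E mul0r.
have nuM : M^T \notin unitmx by rewrite unitmxE det_tr dM unitr0.
have : kermx M^T != 0 by rewrite kermx_eq0 row_free_unit.
move=> /negP nK.
have [i zi] : exists i, row i (kermx M^T) != 0.
  case: (boolP [exists i, row i (kermx M^T) != 0]) => [/existsP // | ].
  rewrite negb_exists => /forallP H; exfalso; apply: nK.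
  apply/eqP/row_matrixP => i; rewrite row0; exact/eqP/negPn/H.
set z := row i (kermx M^T) in zi.
have zM : z *m M^T = 0 by apply/sub_kermxP; exact: row_sub.
have Mz : M *m z^T = 0 by rewrite -(trmxK M) -trmx_mul zM trmx0.
exists z^T, (p0 *m z^T); split; first by rewrite trmx_eq0.
move=> v vP.
have iv : (index v (enum P) < d.+1)%N.
  by apply: leq_trans cP; rewrite cardE index_mem mem_enum.
have := congr1 (row (Ordinal iv)) Mz; rewrite row_mul rowK /= nth_index ?mem_enum //.
by rewrite row0 mulmxBl => /eqP; rewrite subr_eq0 => /eqP.
Qed.
End Hyper.


Section Geo.
Variables (F : finFieldType) (d : nat) (S : finType) (P : {ffun F -> S} -> Prop).
Hypotheses (oa : isOA P).
Variable s0 : S.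
Local Notation V := 'rV[F]_d.+1.
Local Notation T := (V * S)%type.
Local Open Scope ring_scope.

Definition line (u w : V) : {set V} := [set u + t *: w | t : F].
Definition Lines : {set {set V}} :=
  [set L | [exists u, exists w, (w != 0) && (L == line u w)]].
Definition pr (L : {set V}) := [pick uw : V * V | (uw.2 != 0) && (L == line uw.1 uw.2)].
Definition pu L := (odflt (0, 0) (pr L)).1.
Definition pw L := (odflt (0, 0) (pr L)).2.

Lemma pr_spec L : L \in Lines -> pw L != 0 /\ L = line (pu L) (pw L).
Proof.
rewrite inE => /existsP[u /existsP[w /andP[w0 /eqP E]]].
rewrite /pu /pw /pr; case: pickP => [[u' w'] /andP[/= h /eqP e] | H] //=.
by move: (H (u, w)); rewrite /= w0 E eqxx.
Qed.

Lemma param_inj (u w : V) : w != 0 -> injective (fun t : F => u + t *: w).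
Proof.
move=> w0 t1 t2 /addrI /eqP; rewrite -subr_eq0 -scalerBl scaler_eq0 (negbTE w0) orbF.
by rewrite subr_eq0 => /eqP.
Qed.

Lemma in_line (u w v : V) : v \in line u w -> exists t, v = u + t *: w.
Proof. by move=> /imsetP[t _ ->]; exists t. Qed.

Lemma line_uniq (u w : V) a b : w != 0 -> a != b ->
  line u w = line (u + a *: w) ((u + b *: w) - (u + a *: w)).
Proof.
move=> w0 ab.
have dd : (u + b *: w) - (u + a *: w) = (b - a) *: w.
  by rewrite opprD addrACA subrr add0r scalerBl.
have ba : b - a != 0 by rewrite subr_eq0 eq_sym.
have comb s : u + a *: w + s *: ((b - a) *: w) = u + (a + s * (b - a)) *: w.
  by rewrite scalerA -addrA -scalerDl.
rewrite dd; apply/setP => v; apply/imsetP/imsetP => [[t _ ->]|[s _ ->]].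
  exists ((t - a) / (b - a)) => //; rewrite comb divfK //.
  by congr (_ + _ *: _); rewrite addrC subrK.
by exists (a + s * (b - a)) => //; rewrite comb.
Qed.

Lemma line_closed (u w : V) (f : 'cV[F]_d.+1) c a b : a != b ->
  (u + a *: w) *m f = c -> (u + b *: w) *m f = c -> forall t, (u + t *: w) *m f = c.
Proof.
move=> ab ha hb t.
rewrite mulmxDl -scalemxAl in ha.
rewrite mulmxDl -scalemxAl in hb.
rewrite mulmxDl -scalemxAl.
have : (a - b) *: (w *m f) = 0.
  by rewrite scalerBl; apply/eqP; rewrite subr_eq0; apply/eqP; apply: (addrI (u *m f)); rewrite ha hb.
move/eqP; rewrite scaler_eq0 subr_eq0 (negbTE ab) /= => /eqP wf.
by rewrite wf scaler0 addr0 -ha wf scaler0 addr0.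
Qed.

Definition blk (u w : V) (r : {ffun F -> S}) : {set T} := [set (u + t *: w, r t) | t : F].
Definition Blocks : {set {set T}} :=
  [set b | `[< exists L r, [/\ L \in Lines, P r & b = blk (pu L) (pw L) r] >]].
Definition gr (v : V) : {set T} := [set x : T | x.1 == v].
Definition Groups : {set {set T}} := [set gr v | v : V].

Lemma in_Blocks b : b \in Blocks ->
  exists L r, [/\ L \in Lines, P r, pw L != 0, L = line (pu L) (pw L) & b = blk (pu L) (pw L) r].
Proof.
rewrite inE => /asboolP[L [r [LL Pr ->]]]; have [w0 E] := pr_spec LL.
by exists L, r.
Qed.

Lemma triv_Groups : trivIset Groups.
Proof.
apply/trivIsetP => A B /imsetP[v _ ->] /imsetP[v' _ ->] neq.
apply/pred0P => x /=; rewrite !inE; apply/negP => /andP[/eqP e1 /eqP e2].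
by move: neq; rewrite -e1 -e2 eqxx.
Qed.

Lemma pblock_gr x : pblock Groups x = gr x.1.
Proof. by apply: def_pblock; [exact: triv_Groups | apply: imset_f | rewrite inE]. Qed.

Lemma gr_inj : injective gr.
Proof.
move=> v v' e; have : (v, s0) \in gr v' by rewrite -e inE.
by rewrite inE => /eqP.
Qed.

Lemma card_gr v : #|gr v| = #|S|.
Proof.
have -> : gr v = [set (v, s) | s : S].
  apply/setP => x; rewrite inE; apply/eqP/imsetP => [<-|[s _ ->]] //.
  by exists x.2 => //; case: x.
by rewrite card_imset ?cardsT // => s s' [].
Qed.

Lemma card_blk u w r : w != 0 -> #|blk u w r| = #|F|.
Proof.
move=> w0; rewrite card_imset ?cardsT // => t t' [] /(param_inj w0).
done.
Qed.

Lemma GDD_part : partition Groups [set: T].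
Proof.
apply/and3P; split; last 1 first.
- apply/imsetP => [[v _ e]]; have : (v, s0) \in gr v by rewrite inE.
  by rewrite -e inE.
- apply/eqP/setP => x; rewrite inE; apply/bigcupP; exists (gr x.1).
    exact: imset_f.
  by rewrite inE.
- exact: triv_Groups.
Qed.

Lemma GDD_meet b g : b \in Blocks -> g \in Groups -> (#|b :&: g| <= 1)%N.
Proof.
move=> /in_Blocks[L [r [_ _ w0 _ ->]]] /imsetP[v _ ->].
rewrite leqNgt; apply/negP => /card_gt1P[x [y [xi yi]]].
move: xi yi; rewrite !inE => /andP[/imsetP[t1 _ ->] /eqP e1] /andP[/imsetP[t2 _ ->] /eqP e2].
have := param_inj w0 (etrans e1 (esym e2)) => ->.
by rewrite eqxx.
Qed.

Lemma GDD_pair x y : pblock Groups x != pblock Groups y ->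
  #|[set b in Blocks | (x \in b) && (y \in b)]| = 1%N.
Proof.
rewrite !pblock_gr => hxy.
have v12 : x.1 != y.1 by apply: contra hxy => /eqP ->.
set L0 := line x.1 (y.1 - x.1).
have w0 : y.1 - x.1 != 0 by rewrite subr_eq0 eq_sym.
have LL : L0 \in Lines.
  by rewrite inE; apply/existsP; exists x.1; apply/existsP; exists (y.1 - x.1); rewrite w0 eqxx.
have [pw0 EL] := pr_spec LL.
set u := pu L0 in EL *; set w := pw L0 in EL pw0 *.
have : x.1 \in L0 by apply/imsetP; exists 0 => //; rewrite scale0r addr0.
rewrite EL => /in_line[t1 e1].
have : y.1 \in L0 by apply/imsetP; exists 1 => //; rewrite scale1r addrC subrK.
rewrite EL => /in_line[t2 e2].
have t12 : t1 != t2 by apply: contra v12 => /eqP t; rewrite e1 e2 t.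
have [r [[Pr [r1 r2]] ru]] := oa t12 x.2 y.2.
apply/eqP/cards1P; exists (blk u w r); apply/setP => b; rewrite !inE.
apply/andP/eqP => [[bB /andP[xb yb]] | ->].
- have bB' : b \in Blocks by rewrite inE.
  have [L [r' [LL' Pr' w0' EL' eb]]] := in_Blocks bB'.
  rewrite eb in xb yb *.
  move: xb yb => /imsetP[t1' _ ex] /imsetP[t2' _ ey].
  have t12' : t1' != t2'.
    by apply: contra v12 => /eqP t; rewrite ex ey t.
  have EL2 : L = L0.
    rewrite EL' (line_uniq (pu L) w0' t12') /L0.
    by rewrite ex ey.
  rewrite EL2 -/u -/w in ex ey *.
  have et1 : t1' = t1 by apply: (@param_inj u w pw0); rewrite /= -e1 ex.
  have et2 : t2' = t2 by apply: (@param_inj u w pw0); rewrite /= -e2 ey.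
  have -> : r' = r.
    by symmetry; apply: ru; rewrite -et1 -et2 ex ey.
  by [].
- split.
    by apply/asboolP; exists L0, r; split.
  apply/andP; split; apply/imsetP.
    by exists t1 => //; rewrite -e1 r1; case: x {hxy v12 e1 r1 w0 LL EL L0 u w pw0 e2 t12 ru r2}.
  by exists t2 => //; rewrite -e2 r2; case: y {hxy v12 e1 r1 w0 LL EL L0 u w pw0 e2 t12 ru r2}.
Qed.

Lemma geo_strong : strong_dim_ge Groups Blocks d.+1.
Proof.
move=> A cA.
set PA := [set a.1 | a in A].
have cPA : (#|PA| <= d.+1)%N by apply: leq_trans (leq_imset_card _ _) cA.
have [f [c [f0 hf]]] := hyperplane cPA.
exists [set x : T | x.1 *m f == c]; split.
- split.
  + apply/setP => x; apply/idP/bigcupP => [xS | [g /andP[/imsetP[v _ ->] gS] xg]].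
      exists (gr x.1); last by rewrite inE.
      apply/andP; split; first exact: imset_f.
      apply/subsetP => z; rewrite !inE => /eqP ->; by rewrite inE in xS.
    exact: (subsetP gS).
  + move=> b /in_Blocks[L [r [_ _ w0 _ ->]]] /card_gt1P[x [y [xi yi xy]]].
    move: xi yi; rewrite !inE => /andP[/imsetP[t1 _ ex] hx] /andP[/imsetP[t2 _ ey] hy].
    rewrite ex ey /= in hx hy xy.
    have t12 : t1 != t2 by apply: contra xy => /eqP ->.
    apply/subsetP => z /imsetP[t _ ->]; rewrite inE /=; apply/eqP.
    exact: (line_closed t12 (eqP hx) (eqP hy)).
- have [j fj] : exists j, f j ord0 != 0.
    case: (boolP [exists j, f j ord0 != 0]) => [/existsP // | ].
    rewrite negb_exists => /forallP H; exfalso; move: f0; apply/negP; rewrite negbK.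
    by apply/eqP/matrixP => i k; rewrite ord1 mxE; exact/eqP/negPn/H.
  apply/negP => /eqP ST.
  have : (if c == 0 then delta_mx 0 j else 0, s0) \in [set: T] by rewrite inE.
  rewrite -ST inE /=; case: ifP => [/eqP -> | /negbT cn].
    rewrite -rowE => /eqP/matrixP/(_ ord0 ord0); rewrite !mxE => E.
    by rewrite E eqxx in fj.
  by rewrite mul0mx eq_sym (negbTE cn).
- apply/subsetP => a aA; rewrite inE hf //; exact: imset_f.
Qed.

Lemma geo_all : [/\ is_kGDD #|F| Groups Blocks,
  has_type #|S| (#|F| ^ d.+1) Groups & strong_dim_ge Groups Blocks d.+1].
Proof.
split.
- split; last by move=> b /in_Blocks[L [r [_ _ w0 _ ->]]]; exact: card_blk.
  split; [exact: GDD_part | exact: GDD_meet | exact: GDD_pair].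
- split; last by move=> g /imsetP[v _ ->]; exact: card_gr.
  by rewrite card_imset; [rewrite ?cardsT card_mx mul1n | exact: gr_inj].
- exact: geo_strong.
Qed.

End Geo.


Theorem mainTheorem8 (d q : nat) (hd : 0 < d) (hq : prime_power q) :
  exists N : nat, forall n : nat, N <= n ->
    exists (T : finType) (G B : {set {set T}}),
      [/\ is_kGDD q G B, has_type n (q ^ d) G & strong_dim_ge G B d].
Proof.
case: hq => p [e [pp e0 ->]].
have [F _ cF] := pPrimePowerField pp e0.
have q2 : 2 <= p ^ e.
  by apply: leq_trans (prime_gt1 pp) _; rewrite -{1}(expn1 p) leq_exp2l ?prime_gt1.
have [N0 HN] := OA_large q2.
exists (maxn N0 1) => n le.
have [S [P [cS oa]]] := HN n (leq_trans (leq_maxl _ _) le).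
have : 0 < #|S| by rewrite cS; apply: leq_trans le; exact: leq_maxr.
case/card_gt0P => s0 _.
have ec : #|F| = #|'I_(p ^ e)| by rewrite cF card_ord.
have oaF := OA_col_transport (bijfK ec) (bijgK ec) oa.
case: d hd => [//|d'] _.
have := geo_all d' oaF s0.
rewrite cF cS => H.
by exists _, (Groups F d' S), (Blocks d' (fun r' : {ffun F -> S} => P [ffun c => r' (bijg ec c)])).
Qed.
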